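(* Let $p$ be a prime, $G$ and $H$ finite $p$-groups, and for $\Gamma\in\{G,H\}$ let $N_\Gamma$ be a subgroup of $\Gamma$ containing $\Gamma'$. Let $k$ be a field of characteristic $p$ and $\phi:kG\to kH$ a ring isomorphism with $\phi(I(N_G)kG)=I(N_H)kH$. Then for every positive integer $t$, $\phi\big(I(\Omega_t(G:N_G))kG\big)=I(\Omega_t(H:N_H))kH$.
   Context: For a subgroup $N$ of $\Gamma$, $I(N)$ is the augmentation ideal of $kN$ and $I(N)k\Gamma$ the relative augmentation ideal. For a normal subgroup $N$ of $\Gamma$, $\Omega_t(\Gamma:N)=\langle g\in\Gamma: g^{p^t}\in N\rangle$, i.e.\ the subgroup containing $N$ with $\Omega_t(\Gamma:N)/N=\Omega_t(\Gamma/N)$. *)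

(* Defs.v *)
From HB Require Import structures.
From mathcomp Require Import all_boot all_order all_algebra all_fingroup.
From mathcomp Require Import pgroup commutator.
Set Implicit Arguments. Unset Strict Implicit. Unset Printing Implicit Defensive.
Import GRing.Theory.
Local Open Scope ring_scope.

(* Group algebra kG of the finite group G = [set: gT] over a ring k,
   realized as functions gT -> k (coefficients of the group elements). *)
Notation galg k gT := {ffun gT -> k}.

Section GroupAlgebra.
Variables (k : comNzRingType) (gT : finGroupType).

Definition gbasis (g : gT) : galg k gT := [ffun x => (x == g)%:R].

Definition gmul (a b : galg k gT) : galg k gT :=
  [ffun x => \sum_(y : gT) a y * b ((y^-1 * x)%g)].

Definition gone : galg k gT := gbasis 1%g.

(* augmentation ideal I(N) of kN, viewed inside kG: elements supported on N
   with augmentation (sum of coefficients) 0 *)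
Definition in_aug_ideal (N : {set gT}) (a : galg k gT) : Prop :=
  (forall x, x \notin N -> a x = 0) /\ \sum_(x : gT) a x = 0.

(* relative augmentation ideal I(N)kG : finite sums of products a*b with
   a in I(N) and b in kG *)
Definition in_rel_aug (N : {set gT}) (f : galg k gT) : Prop :=
  exists s : seq (galg k gT * galg k gT),
    (forall ab, ab \in s -> in_aug_ideal N ab.1) /\
    f = \sum_(ab <- s) gmul ab.1 ab.2.

End GroupAlgebra.

Definition galg_ring_iso (k : comNzRingType) (gT hT : finGroupType)
    (phi : galg k gT -> galg k hT) : Prop :=
  [/\ bijective phi,
      forall a b, phi (a + b) = phi a + phi b,
      forall a b, phi (gmul a b) = gmul (phi a) (phi b) &
      phi (gone k gT) = gone k hT].

(* phi(A) = B for subsets given as predicates *)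
Definition maps_onto (A B : Type) (phi : A -> B) (P : A -> Prop) (Q : B -> Prop)
  : Prop :=
  (forall a, P a -> Q (phi a)) /\ (forall b, Q b -> exists2 a, P a & phi a = b).

(* Omega_t(Gamma : N) = < g in Gamma : g^(p^t) in N > *)
Definition Omega_rel (gT : finGroupType) (p t : nat) (N : {set gT}) : {group gT} :=
  <<[set g : gT | (g ^+ (p ^ t))%g \in N]>>%G.

(* Main.v *)
Require Import Defs.
From HB Require Import structures.
From mathcomp Require Import all_boot all_order all_algebra all_fingroup.
From mathcomp Require Import pgroup commutator.
From Stdlib Require Import Setoid.
Set Implicit Arguments. Unset Strict Implicit. Unset Printing Implicit Defensive.
Import GRing.Theory.
Local Open Scope ring_scope.
Section Ring.
Variables (k : comNzRingType) (gT : finGroupType).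

Lemma sum_delta (F : gT -> k) u : \sum_z F z * (z == u)%:R = F u.
Proof.
rewrite (bigD1 u) //= eqxx mulr1 big1 ?addr0 // => z /negPf ->; by rewrite mulr0.
Qed.

Lemma gmul_basis_r (a : galg k gT) v :
  gmul a (gbasis k v) = [ffun z => a (z * v^-1)%g].
Proof.
apply/ffunP=> z; rewrite !ffunE.
rewrite -(sum_delta a (z * v^-1)%g); apply: eq_bigr => y _; rewrite ffunE.
have -> : (y^-1 * z == v)%g = (y == z * v^-1)%g.
  apply/eqP/eqP => [<-|->]; first by rewrite invMg invgK mulKVg.
  by rewrite invMg invgK mulgKV.
by [].
Qed.

Definition galgR := {ffun gT -> k}.
HB.instance Definition _ := GRing.Zmodule.on galgR.

Lemma gmulA : associative (@gmul k gT).
Proof.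
move=> a b c; apply/ffunP=> x; rewrite !ffunE.
under [RHS]eq_bigr do rewrite ffunE mulr_suml.
rewrite exchange_big /=; apply: eq_bigr => y _.
rewrite ffunE mulr_sumr [RHS](reindex_inj (mulgI y)) /=; apply: eq_bigr => z _.
by rewrite mulKg mulrA invMg mulgA.
Qed.

Lemma gmul1 : left_id (gone k gT) (@gmul k gT).
Proof.
move=> b; apply/ffunP=> x; rewrite ffunE (bigD1 1%g) //= big1 ?addr0.
  by rewrite ffunE eqxx mul1r invg1 mul1g.
by move=> y /negPf; rewrite ffunE => ->; rewrite mul0r.
Qed.

Lemma gmulr1 : right_id (gone k gT) (@gmul k gT).
Proof. by move=> a; rewrite /gone gmul_basis_r; apply/ffunP=> x; rewrite ffunE invg1 mulg1. Qed.

Lemma gmulDl : left_distributive (@gmul k gT) +%R.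
Proof.
move=> a b c; apply/ffunP=> x; rewrite !ffunE -big_split /=.
by apply: eq_bigr => y _; rewrite ffunE mulrDl.
Qed.

Lemma gmulDr : right_distributive (@gmul k gT) +%R.
Proof.
move=> a b c; apply/ffunP=> x; rewrite !ffunE -big_split /=.
by apply: eq_bigr => y _; rewrite ffunE mulrDr.
Qed.

Lemma gone_neq0 : gone k gT != 0.
Proof. by apply/eqP => /ffunP /(_ 1%g); rewrite !ffunE eqxx; apply/eqP; rewrite oner_eq0. Qed.

HB.instance Definition _ := GRing.Zmodule_isNzRing.Build galgR
  gmulA gmul1 gmulr1 gmulDl gmulDr gone_neq0.

Lemma galgR_mulE (a b : galgR) : a * b = gmul a b. Proof. by []. Qed.
Lemma galgR_oneE : (1 : galgR) = gone k gT. Proof. by []. Qed.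

End Ring.
Section CS.
Variables (k : comNzRingType) (gT : finGroupType) (M : {group gT}).

Definition cs (f : galg k gT) :=
  forall y, \sum_(x | (x * y^-1)%g \in M) f x = 0.

Lemma cs_mul (a b : galg k gT) y : in_aug_ideal M a ->
  \sum_(x | (x * y^-1)%g \in M) (gmul a b) x = 0.
Proof.
case=> aM asum.
pose c := \sum_(w | (w * y^-1)%g \in M) b w.
under eq_bigr do rewrite ffunE.
rewrite exchange_big /=.
transitivity (\sum_z a z * c); last by rewrite -mulr_suml asum mul0r.
apply: eq_bigr => z _; rewrite -mulr_sumr.
case: (boolP (z \in M)) => zM; last by rewrite aM // !mul0r.
congr (_ * _); rewrite (reindex_inj (mulgI z)) /=.
apply: eq_big => [w|w _]; last by rewrite mulKg.
by rewrite -mulgA groupMl.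
Qed.

Lemma in_rel_aug_cs f : in_rel_aug M f -> cs f.
Proof.
case=> s [sM ->] y.
under eq_bigr do rewrite sum_ffunE.
rewrite exchange_big; apply: big1_seq => ab /andP[_ abs].
exact: cs_mul (sM _ abs).
Qed.

Definition rr (x : gT) : gT := repr (M :* x)%g.

Lemma rrM x : (x * (rr x)^-1)%g \in M.
Proof.
have : rr x \in (M :* x)%g by apply: mem_repr (rcoset_refl M x : x \in (M :* x)%g).
by rewrite mem_rcoset => /groupVr; rewrite invMg invgK.
Qed.

Lemma rr_eq x x0 : (rr x == rr x0) = ((x * x0^-1)%g \in M).
Proof.
apply/eqP/idP => [E|xM].
  have h1 := rrM x; have h2 := rrM x0; rewrite E in h1.
  have := groupM h1 (groupVr h2).
  by rewrite invMg invgK mulgA mulgKV.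
rewrite /rr; congr repr; apply/rcoset_eqP; by rewrite mem_rcoset.
Qed.

Lemma cs_in_rel_aug f : cs f -> in_rel_aug M f.
Proof.
move=> csf.
pose a x : galg k gT := [ffun z => f x * ((z == x * (rr x)^-1)%g%:R - (z == 1%g)%:R)].
exists [seq (a x, gbasis k (rr x)) | x <- index_enum gT]; split.
  move=> ab /mapP [x _ ->] /=; split.
    move=> z zM; rewrite ffunE.
    have -> : (z == x * (rr x)^-1)%g = false.
      by apply/negP => /eqP E; move: zM; rewrite E rrM.
    have -> : (z == 1)%g = false.
      by apply/negP => /eqP E; move: zM; rewrite E group1.
    by rewrite subrr mulr0.
  under eq_bigr do rewrite ffunE.
  rewrite -mulr_sumr sumrB.
  have h u : \sum_(z : gT) ((z == u)%:R : k) = 1.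
    by rewrite (bigD1 u) //= eqxx big1 ?addr0 // => z /negPf ->.
  by rewrite !h subrr mulr0.
rewrite big_map; apply/ffunP => z.
rewrite sum_ffunE.
under eq_bigr do rewrite gmul_basis_r ffunE ffunE.
have e1 x : ((z * (rr x)^-1 == x * (rr x)^-1)%g) = (z == x).
  by apply/eqP/eqP => [/mulIg|->].
have e2 x : ((z * (rr x)^-1 == 1)%g) = (rr x == z).
  by rewrite -eq_mulgV1 eq_sym.
under eq_bigr do rewrite e1 e2 mulrBr.
rewrite sumrB.
have -> : \sum_(i <- index_enum gT) f i * (z == i)%:R = f z.
  by rewrite -(sum_delta f z); apply: eq_bigr => i _; rewrite eq_sym.
suff -> : \sum_(i <- index_enum gT) f i * (rr i == z)%:R = 0 by rewrite subr0.
under eq_bigr do rewrite mulr_natr mulrb. rewrite -big_mkcond /=.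
case: (pickP (fun x => rr x == z)) => [x0 /eqP <-|none].
  by rewrite -{2}(csf x0) -(csf x0) ; apply: eq_bigl => x; rewrite rr_eq.
by rewrite big_pred0.
Qed.

Lemma in_rel_augP f : in_rel_aug M f <-> cs f.
Proof. split; [exact: in_rel_aug_cs | exact: cs_in_rel_aug]. Qed.

End CS.
Section Frob.
Variables (R : nzRingType) (p : nat) (pchR : p \in [pchar R])
  (commR : forall x y : R, GRing.comm x y).

Lemma frob_sum (I : Type) (r : seq I) (P : pred I) (F : I -> R) :
  (\sum_(i <- r | P i) F i) ^+ p = \sum_(i <- r | P i) F i ^+ p.
Proof.
elim/big_rec2: _ => [|i y1 y2 _ <-].
  by rewrite expr0n; case: p (prime_gt0 (pcharf_prime pchR)).
by rewrite -!(pFrobenius_autE pchR) pFrobenius_autD_comm.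
Qed.

Lemma frob_sum_iter t (I : Type) (r : seq I) (P : pred I) (F : I -> R) :
  (\sum_(i <- r | P i) F i) ^+ (p ^ t) = \sum_(i <- r | P i) F i ^+ (p ^ t).
Proof.
elim: t => [|t IH]; first by rewrite expn0 expr1; apply: eq_bigr => i _; rewrite expr1.
by rewrite expnSr exprM IH frob_sum; under eq_bigr do rewrite -exprM.
Qed.
End Frob.

Section Pow.
Variables (k : comNzRingType) (Q : finGroupType) (p : nat) (pchk : p \in [pchar k])
  (cQ : forall A B : Q, commute A B).

Lemma galg_comm (a b : galgR k Q) : GRing.comm a b.
Proof.
rewrite /GRing.comm !galgR_mulE; apply/ffunP => x; rewrite !ffunE.
rewrite (reindex_inj (h := fun w => x * w^-1)%g); last first.
  by move=> u v /mulgI /invg_inj.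
apply: eq_bigr => w _ /=.
rewrite mulrC invMg invgK mulgKV; congr (_ * a _).
by rewrite cQ.
Qed.

Lemma galg_pchar : p \in [pchar galgR k Q].
Proof.
have pr := pcharf_prime pchk.
apply/andP; split => //; apply/eqP/ffunP => x.
by rewrite ffunMnE !ffunE (mulrn_pchar pchk).
Qed.

Definition mono (c : k) (E : Q) : galgR k Q := [ffun x => c * (x == E)%:R].

Lemma monoM c d E E' : mono c E * mono d E' = mono (c * d) (E * E')%g.
Proof.
rewrite galgR_mulE; apply/ffunP => x; rewrite !ffunE.
rewrite (bigD1 E) //= big1 ?addr0; last first.
  by move=> y /negPf; rewrite ffunE => ->; rewrite mulr0 mul0r.
rewrite !ffunE eqxx mulr1 mulrA; congr (_ * _%:R); congr nat_of_bool.
by apply/idP/idP => /eqP H; apply/eqP; [rewrite -H mulKVg | rewrite H mulKg].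
Qed.

Lemma monoX c E n : mono c E ^+ n = mono (c ^+ n) (E ^+ n)%g.
Proof.
elim: n => [|n IH].
  by rewrite !expr0 expg0; apply/ffunP => x; rewrite !ffunE mul1r.
by rewrite exprS IH monoM exprS expgS.
Qed.

Lemma mono_decomp (F : galgR k Q) : F = \sum_E mono (F E) E.
Proof.
apply/ffunP => x; rewrite sum_ffunE.
under eq_bigr do rewrite ffunE.
rewrite (bigD1 x) //= eqxx mulr1 big1 ?addr0 // => E.
by rewrite eq_sym => /negPf ->; rewrite mulr0.
Qed.

Lemma pow_formula (F : galgR k Q) t :
  F ^+ (p ^ t) = [ffun C => \sum_(E | (E ^+ (p ^ t))%g == C) F E ^+ (p ^ t)].
Proof.
rewrite {1}(mono_decomp F) (frob_sum_iter galg_pchar galg_comm).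
apply/ffunP => C; rewrite sum_ffunE ffunE [RHS]big_mkcond /=.
apply: eq_bigr => E _; rewrite monoX ffunE eq_sym.
by case: eqP; rewrite ?mulr1 ?mulr0.
Qed.

End Pow.
Section Quo.
Variables (k : comNzRingType) (gT : finGroupType) (N : {group gT}).
Hypothesis sGN : ([set: gT]^`(1) \subset N)%g.

Lemma nN x : x \in ('N(N))%g.
Proof.
have := normal_norm (sub_der1_normal sGN (subsetT N)).
by move/subsetP; apply; rewrite in_setT.
Qed.

Lemma cQ (A B : coset_of N) : commute A B.
Proof.
rewrite -(coset_reprK A) -(coset_reprK B).
set a := repr A; set b := repr B.
rewrite /commute -!morphM ?nN //; apply/eqP; rewrite eq_mulgV1.
rewrite -morphV ?nN // -morphM ?nN ?groupM ?groupV ?nN //.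
apply/eqP; apply: coset_id.
have -> : (a * b * (b * a)^-1 = [~ a^-1, b^-1])%g.
  by rewrite invMg /commg /conjg !invgK !mulgA.
by apply: (subsetP sGN); rewrite derg1 mem_commg ?in_setT.
Qed.

Lemma coset_eqE x y : (coset N x == coset N y) = ((x * y^-1)%g \in N).
Proof.
rewrite eq_mulgV1 -morphV ?nN // -morphM ?nN ?groupV ?nN //.
apply/eqP/idP => [h|h]; last exact: coset_id.
by apply: coset_idr; rewrite ?nN.
Qed.

Definition piN (f : galg k gT) : galgR k (coset_of N) :=
  [ffun D => \sum_(x | coset N x == D) f x].

Lemma piM (a b : galgR k gT) : piN (a * b) = piN a * piN b.
Proof.
apply/ffunP => D; rewrite !galgR_mulE !ffunE.
under eq_bigr do rewrite ffunE.
rewrite exchange_big /=.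
under [RHS]eq_bigr do rewrite ffunE mulr_suml.
rewrite [LHS](partition_big (fun y => coset N y) xpredT) //=.
apply: eq_bigr => E _; apply: eq_bigr => y /eqP <-.
rewrite ffunE -mulr_sumr (reindex_inj (mulgI y)) /=.
congr (_ * _); apply: eq_big => [z|z _]; last by rewrite mulKg.
rewrite morphM ?nN //.
by rewrite -(inj_eq (mulgI ((coset N y)^-1)%g)) mulKg.
Qed.

Lemma pi1 : piN (1 : galgR k gT) = 1.
Proof.
apply/ffunP => D; rewrite [in RHS]galgR_oneE !ffunE.
have o1 x : (1 : galgR k gT) x = (x == 1%g)%:R by rewrite galgR_oneE ffunE.
under eq_bigr do rewrite o1.
rewrite big_mkcond (bigD1 1%g) //= big1 ?addr0.
  by rewrite eqxx morph1 eq_sym; case: ifP.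
by move=> x /negPf ->; case: ifP.
Qed.

Lemma piX (f : galgR k gT) n : piN (f ^+ n) = piN f ^+ n.
Proof.
elim: n => [|n IH]; first by rewrite !expr0 pi1.
by rewrite !exprS piM IH.
Qed.

Lemma cs_pi (g : galg k gT) : cs N g <-> piN g = 0.
Proof.
split => [h|h y].
  apply/ffunP => D; rewrite !ffunE.
  transitivity (\sum_(x | (x * (repr D)^-1)%g \in N) g x); last exact: h.
  by apply: eq_bigl => x; rewrite -{1}(coset_reprK D) coset_eqE.
transitivity (piN g (coset N y)); last by rewrite h ffunE.
by rewrite ffunE; apply: eq_bigl => x; rewrite coset_eqE.
Qed.

End Quo.
Section Main.
Variables (k : fieldType) (gT : finGroupType) (N : {group gT}) (p t : nat).
Hypothesis pchk : p \in [pchar k].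
Hypothesis sGN : ([set: gT]^`(1) \subset N)%g.

Lemma memqE x : ((x ^+ (p ^ t))%g \in N) = ((coset N x) ^+ (p ^ t) == 1)%g.
Proof.
rewrite -morphX ?nN //; apply/idP/eqP => [/coset_id //|]; apply: coset_idr.
exact: nN.
Qed.

Lemma omegaE x : (x \in Omega_rel p t N) = ((coset N x) ^+ (p ^ t) == 1)%g.
Proof.
have gs : group_set [set g : gT | (g ^+ (p ^ t))%g \in N].
  apply/group_setP; split; first by rewrite inE expg1n group1.
  move=> a b; rewrite !inE !memqE => /eqP ha /eqP hb.
  by rewrite morphM ?nN // expgMn ?ha ?hb ?mulg1 //; apply: cQ.
by rewrite /Omega_rel /= gen_set_id // inE memqE.
Qed.

Lemma predE x y : ((x * y^-1)%g \in Omega_rel p t N) =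
   ((coset N x) ^+ (p ^ t) == (coset N y) ^+ (p ^ t))%g.
Proof.
rewrite omegaE morphM ?nN // morphV ?nN // expgMn; last exact: cQ.
by rewrite expgVn -eq_mulgV1.
Qed.

Definition Pq (f : galg k gT) := forall y,
  \sum_(x | ((coset N x) ^+ (p ^ t) == (coset N y) ^+ (p ^ t))%g) f x = 0.

Lemma lhsE (f : galg k gT) : in_rel_aug (Omega_rel p t N) f <-> Pq f.
Proof.
rewrite in_rel_augP.
have E y : \sum_(x | (x * y^-1)%g \in Omega_rel p t N) f x =
  \sum_(x | ((coset N x) ^+ (p ^ t) == (coset N y) ^+ (p ^ t))%g) f x.
  by apply: eq_bigl => x; rewrite predE.
by split => h y; [rewrite -E | rewrite E]; apply: h.
Qed.

Lemma sumE (f : galg k gT) C :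
  \sum_(E | (E ^+ (p ^ t) == C)%g) piN N f E =
  \sum_(x | ((coset N x) ^+ (p ^ t) == C)%g) f x.
Proof.
rewrite [RHS](partition_big (fun x => coset N x) (fun E => (E ^+ (p ^ t) == C)%g)) //=.
apply: eq_bigr => E HE; rewrite ffunE; apply: eq_bigl => x.
by case: (coset N x =P E) => [->|_]; rewrite ?HE ?andbF ?andbT.
Qed.

Lemma rhsE (f : galgR k gT) : in_rel_aug N (f ^+ (p ^ t)) <-> Pq f.
Proof.
have q0 : (0 < p ^ t)%N by rewrite expn_gt0 prime_gt0 // (pcharf_prime pchk).
rewrite in_rel_augP cs_pi // piX // (pow_formula pchk (cQ sGN)).
have step : forall C, (\sum_(E | (E ^+ (p ^ t) == C)%g) piN N f E ^+ (p ^ t) == 0)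
   = (\sum_(x | ((coset N x) ^+ (p ^ t) == C)%g) f x == 0).
  move=> C; rewrite -sumE -(frob_sum_iter pchk); last by move=> a b; apply: mulrC.
  by rewrite expf_eq0 q0.
split => [h y|h].
  apply/eqP; rewrite -step.
  by move/ffunP: h => /(_ ((coset N y) ^+ (p ^ t))%g); rewrite !ffunE => ->.
apply/ffunP => C; rewrite !ffunE; apply/eqP; rewrite step.
case: (pickP (fun x => ((coset N x) ^+ (p ^ t) == C)%g)) => [x0 /eqP <-|none].
  by rewrite h.
by rewrite big_pred0.
Qed.

Lemma key (f : galgR k gT) :
  in_rel_aug (Omega_rel p t N) f <-> in_rel_aug N (f ^+ (p ^ t)).
Proof. by rewrite lhsE rhsE. Qed.

End Main.

Theorem lemma2p6 (p : nat) (gT hT : finGroupType)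
    (NG : {group gT}) (NH : {group hT})
    (k : fieldType) (phi : galg k gT -> galg k hT) :
  prime p ->
  (p.-group [set: gT])%g -> (p.-group [set: hT])%g ->
  ([set: gT]^`(1) \subset NG)%g -> ([set: hT]^`(1) \subset NH)%g ->
  p \in [pchar k] ->
  galg_ring_iso phi ->
  maps_onto phi (in_rel_aug NG) (in_rel_aug NH) ->
  forall t : nat, (0 < t)%N ->
    maps_onto phi (in_rel_aug (Omega_rel p t NG)) (in_rel_aug (Omega_rel p t NH)).
Proof.
move=> pr pG pH sG sH pchk [[psi phiK psiK] phiD phiM phi1] [onto1 onto2] t _.
have phiX (f : galgR k gT) n : phi (f ^+ n) = ((phi f : galgR k hT) ^+ n).
  elim: n => [|n IH]; first by rewrite !expr0 !galgR_oneE phi1.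
  by rewrite !exprS galgR_mulE phiM IH.
split.
  move=> a /(key t pchk sG) ha; apply/(key t pchk sH).
  by rewrite -phiX; apply: onto1.
move=> b /(key t pchk sH) hb; exists (psi b); last exact: psiK.
apply/(key t pchk sG).
have [a' ha' e] := onto2 _ hb.
suff <- : a' = (psi b : galgR k gT) ^+ (p ^ t) by [].
by rewrite -(phiK a') e -{1}(psiK b) -phiX phiK.
Qed.
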